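(* Let $p,q\in(0,1)$ be parameters of two Bernoulli distributions $[p,1-p]$ and $[q,1-q]$. Let $m\ge1$ be an integer such that $mp$ and $mq$ are integers. Define $l_{p2q}=\binom{m}{mp}q^{mp}(1-q)^{m-mp}$, the likelihood of observing empirical distribution $p$ from $m$ samples when the true distribution is $q$. Define $l_{q2p}=\binom{m}{mq}p^{mq}(1-p)^{m-mq}$ analogously. If $l_{p2q}>l_{q2p}$, then $D_{\chi^2}(p,q)<D_{\chi^2}(q,p)$.
   Context: For Bernoulli parameters $p,q\in(0,1)$, the $\chi^2$ divergence is $D_{\chi^2}(p,q)=\frac{p^2}{q}+\frac{(1-p)^2}{1-q}-1=\frac{(p-q)^2}{q(1-q)}$. *)

(* Defs.v *)
From mathcomp Require Import all_boot all_order all_algebra.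
From mathcomp Require Import reals.
Set Implicit Arguments. Unset Strict Implicit. Unset Printing Implicit Defensive.
Import Order.TTheory GRing.Theory Num.Theory.
Local Open Scope ring_scope.

Definition chi2 {R : realType} (p q : R) : R :=
  p ^+ 2 / q + (1 - p) ^+ 2 / (1 - q) - 1.

Definition lik {R : realType} (m k : nat) (q : R) : R :=
  ('C(m, k))%:R * q ^+ k * (1 - q) ^+ (m - k).

(* Main.v *)
Require Import Defs.
From mathcomp Require Import all_boot all_order all_algebra.
From mathcomp Require Import reals.
From mathcomp Require Import all_classical all_reals all_analysis.
From mathcomp Require Import ring lra zify.
Import Order.TTheory GRing.Theory Num.Theory.
Import numFieldNormedType.Exports.
Local Open Scope ring_scope.

Section KL.
Variable R : realType.

Lemma dln (a s t : R) : 0 < a + s * t ->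
  is_derive t 1 (fun u => ln (a + s * u)) ((a + s * t)^-1 * s).
Proof.
move=> h.
have hg0 : is_derive t 1 (cst a + s \*: (@id R)) (0 + s *: 1).
  apply: is_deriveD.
have e : (cst a + s \*: (@id R)) = (fun u : R => a + s * u).
  by apply/funext => u.
rewrite e add0r in hg0. have e2 : s *: (1:R) = s by rewrite -[RHS]mulr1. rewrite e2 in hg0.
have := (@is_derive1_comp R (@ln R) (fun u => a + s * u) t _ _ (is_derive1_ln h) hg0). by [].
Qed.

Lemma dlin (a s t b c : R) : 0 < a + s * t -> 0 < b + c * t ->
  is_derive t 1 (fun u => ln (a + s * u) - ln (b + c * u))
     ((a + s * t)^-1 * s - (b + c * t)^-1 * c).
Proof.
move=> h1 h2.
have := is_deriveB (dln _ _ _ h1) (dln _ _ _ h2).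
by [].
Qed.

Definition E (al t : R) := (2 * al) * (ln (al - t) - ln (al + t)) +
   (2 - 2 * al) * (ln (1 - al + t) - ln (1 - al - t)).

Lemma E_ge0 (al d : R) : 1/2 <= al -> 0 <= d -> 0 < al - d -> 0 < 1 - al - d ->
  0 <= E al d.
Proof.
move=> h1 h2 h3 h4.
have E0 : E al 0 = 0 by rewrite /E !subr0 !addr0 !subrr !mulr0 addr0.
have hd : forall t, 0 <= t <= d -> is_derive t 1 (E al)
   ((2 * al) * ((al + (-1) * t)^-1 * (-1) - (al + 1 * t)^-1 * 1) +
    (2 - 2 * al) * ((1 - al + 1 * t)^-1 * 1 - (1 - al + (-1) * t)^-1 * (-1))).
  move=> t /andP[t0 td].
  have H1 := @dlin al (-1) t al 1; have H2 := @dlin (1 - al) 1 t (1 - al) (-1).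
  have := is_deriveD (is_deriveZ (2 * al) (H1 ltac:(lra) ltac:(lra)))
                     (is_deriveZ (2 - 2 * al) (H2 ltac:(lra) ltac:(lra))).
  have e : ((2 * al) \*: (fun u => ln (al + (-1) * u) - ln (al + 1 * u)) +
     (2 - 2 * al) \*: (fun u => ln (1 - al + 1 * u) - ln (1 - al + (-1) * u))) = E al.
    apply/funext => u; rewrite /E !fctE /= !mulN1r !mul1r. by [].
  by rewrite e.
rewrite -E0.
apply: (@ger0_derive1_ndecr R (E al) 0 d) => //.
- move=> x; rewrite in_itv /= => /andP[? ?].
  have H : 0 <= x <= d by apply/andP; split; lra.
  by case: (hd x H).
- move=> x; rewrite in_itv /= => /andP[x0 xd].
  have H : 0 <= x <= d by apply/andP; split; lra.
  rewrite derive1E; case: (hd x H) => _ ->.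
  rewrite !mulN1r !mul1r !mulr1 !mulrN1.
  set A := al - x; set B := al + x; set C := 1 - al + x; set D := 1 - al - x.
  have hA : 0 < A by rewrite /A; lra.
  have hB : 0 < B by rewrite /B; lra.
  have hC : 0 < C by rewrite /C; lra.
  have hD : 0 < D by rewrite /D; lra.
  have -> : 2 * al * (- A^-1 - B^-1) + (2 - 2 * al) * (C^-1 - - D^-1) =
     (4 * x ^+ 2 * (2 * al - 1)) / (A * B * C * D).
    rewrite /A /B /C /D; field.
    by rewrite -/A -/B -/C -/D !gt_eqF.
  apply: divr_ge0; last by rewrite !mulr_ge0 // ltW.
  apply: mulr_ge0; [apply: mulr_ge0 => //; exact: sqr_ge0 | lra].
- apply: derivable_within_continuous => x; rewrite in_itv /= => /andP[? ?].
  have H : 0 <= x <= d by apply/andP; split; lra.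
  by case: (hd x H).
Qed.
End KL.

Section H.
Variable R : realType.

Lemma bern (x : R) k : -1 <= x -> 1 + k%:R * x <= (1 + x) ^+ k.
Proof.
move=> hx; elim: k => [|k IH]; first by rewrite mul0r addr0 expr0.
rewrite exprS.
have h1 : 0 <= 1 + x by lra.
have h2 : (1 + x) * (1 + k%:R * x) <= (1 + x) * (1 + x) ^+ k by rewrite ler_wpM2l.
apply: le_trans h2.
have hk : 0 <= (k%:R : R) by [].
rewrite -natr1. nra.
Qed.

Lemma step (n : nat) : (1 <= n)%N ->
  (n.+1%:R : R) ^+ (n + n).+1 <= n%:R ^+ n * (n.+2%:R) ^+ n.+1.
Proof.
move=> hn.
set a : R := n%:R.
have ha : 1 <= a by rewrite /a ler1n.
have e1 : n.+1%:R = a + 1 :> R by rewrite /a -natr1.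
have e2 : n.+2%:R = a + 2 :> R by rewrite /a -[n.+2]addn2 natrD.
rewrite e1 e2.
have hb := @bern (- ((a + 1) ^+ 2)^-1) n.+1.
have hpos : 0 < (a + 1) ^+ 2 by apply: exprn_gt0; lra.
have hx : - ((a + 1) ^+ 2)^-1 >= -1.
  rewrite lerN2 invf_le1 //. nra.
have := hb hx.
have -> : 1 - ((a + 1) ^+ 2)^-1 = a * (a + 2) / (a + 1) ^+ 2.
  field; lra.
have -> : 1 + n.+1%:R * - ((a + 1) ^+ 2)^-1 = a / (a + 1).
  rewrite -natr1 -/a. field; lra.
rewrite expr_div_n -exprM.
rewrite ler_pdivlMr; last by apply: exprn_gt0; nra.
rewrite mulrAC ler_pdivrMr; last by lra.
rewrite exprMn.
have -> : (2 * n.+1)%N = (n + n).+1.+1 by rewrite mul2n -addnn addnS addSn.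
rewrite !exprS.
move=> H.
have ha0 : 0 < a by lra.
have ha1 : 0 < a * (a + 1) by nra.
rewrite -(ler_pM2l ha1).
set L := (a + 1) ^+ (n + n); set M := (a + 2) ^+ n; set P := a ^+ n.
have -> : a * (a + 1) * ((a + 1) * L) = a * ((a + 1) * ((a + 1) * L)) by ring.
have -> : a * (a + 1) * (P * ((a + 2) * M)) = a * P * ((a + 2) * M) * (a + 1) by ring.
exact: H.
Qed.

Lemma Pmono (n i : nat) : let y := (n + i)%N in
  (n.+1%:R : R) ^+ n * (y%:R) ^+ y <= (y.+1%:R) ^+ y * (n%:R) ^+ n.
Proof.
elim: i => [|i IH] /=; first by rewrite addn0 mulrC.
move: IH; rewrite addnS; set y := (n + i)%N => IH.
case: (posnP y) => [y0|ypos].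
  move: y0; rewrite /y => /eqP; rewrite addn_eq0 => /andP[/eqP n0 /eqP i0].
  by rewrite n0 i0 /= !expr0 !expr1 mul1r mulr1 ler_nat.
have hs := step y ypos.
have hy : 0 < (y%:R : R) ^+ y by apply: exprn_gt0; rewrite ltr0n.
rewrite -(ler_pM2r hy).
have H1 := ler_wpM2r (exprn_ge0 y.+1 (ler0n R y.+1)) IH.
apply: le_trans.
  have -> : (n.+1%:R : R) ^+ n * y.+1%:R ^+ y.+1 * y%:R ^+ y =
    (n.+1%:R ^+ n * y%:R ^+ y) * y.+1%:R ^+ y.+1 by ring.
  exact: H1.
have -> : (y.+1%:R : R) ^+ y * n%:R ^+ n * y.+1%:R ^+ y.+1 =
   n%:R ^+ n * y.+1%:R ^+ (y + y).+1.
  rewrite -addSn exprD exprS; ring.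
have -> : (y.+2%:R : R) ^+ y.+1 * n%:R ^+ n * y%:R ^+ y =
   n%:R ^+ n * (y%:R ^+ y * y.+2%:R ^+ y.+1) by ring.
by rewrite ler_wpM2l // exprn_ge0.
Qed.

Definition hR (m x : nat) : R :=
  ('C(m, x))%:R * (x%:R) ^+ x * ((m - x)%:R) ^+ (m - x).

Lemma hstep (x n : nat) : (n <= x)%N -> hR (x.+1 + n) x <= hR (x.+1 + n) x.+1.
Proof.
move=> nx; rewrite /hR.
set m := (x.+1 + n)%N.
have e1 : (m - x = n.+1)%N by rewrite /m addSn subSn ?leq_addr // addKn.
have e2 : (m - x.+1 = n)%N by rewrite /m addKn.
rewrite e1 e2.
have hb := mul_bin_left m x; rewrite e1 in hb.
have hb' : (x.+1%:R : R) * ('C(m, x.+1))%:R = n.+1%:R * ('C(m, x))%:R.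
  by rewrite -!natrM hb.
have hP := Pmono n (x - n); rewrite subnKC // in hP.
have -> : ('C(m, x.+1))%:R * (x.+1%:R : R) ^+ x.+1 * n%:R ^+ n =
   (x.+1%:R * ('C(m, x.+1))%:R) * ((x.+1%:R) ^+ x * n%:R ^+ n) by rewrite exprS; ring.
rewrite hb'.
have -> : ('C(m, x))%:R * (x%:R : R) ^+ x * n.+1%:R ^+ n.+1 =
   (n.+1%:R * ('C(m, x))%:R) * (n.+1%:R ^+ n * x%:R ^+ x) by rewrite exprS; ring.
by rewrite ler_wpM2l // mulr_ge0.
Qed.

Lemma hmono (m x i : nat) : (m <= x + x)%N -> (x + i <= m)%N -> hR m x <= hR m (x + i).
Proof.
move=> hm; elim: i => [|i IH] hi; first by rewrite addn0.
have hi' : (x + i <= m)%N by lia.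
apply: le_trans (IH hi') _.
have e : m = ((x + i).+1 + (m - (x + i).+1))%N by rewrite subnKC // -addnS.
rewrite addnS [in X in _ <= X]e [in X in X <= _]e.
apply: hstep.
rewrite leq_subLR; lia.
Qed.

Lemma hsym (m x : nat) : (x <= m)%N -> hR m x = hR m (m - x).
Proof.
move=> h; rewrite /hR bin_sub // subKn //; ring.
Qed.

Lemma hmain (m k j : nat) : (k <= j)%N -> (j <= m)%N -> (m <= k + j)%N -> hR m k <= hR m j.
Proof.
move=> kj jm mkj.
case: (leqP m (k + k)) => hk.
  have := @hmono m k (j - k) hk; rewrite subnKC //; apply; exact: jm.
rewrite hsym; last by lia.
have := @hmono m (m - k) (j - (m - k)); rewrite subnKC; last by lia.
apply; lia.
Qed.
End H.


Lemma lnpp (R : realType) (x y : R) (a b : nat) : 0 < x -> 0 < y ->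
  ln (x ^+ a * y ^+ b) = ln x * a%:R + ln y * b%:R.
Proof.
move=> hx hy.
have H := @lnM R (x ^+ a) (y ^+ b).
rewrite /= !posrE !exprn_gt0 // in H.
rewrite H // !lnXn // !mulr_natr //.
Qed.
Lemma lnle (R : realType) (x y : R) : 0 < x -> 0 < y -> ln x <= ln y -> x <= y.
Proof.
move=> hx hy.
have H := @ler_ln R x y.
rewrite /= !posrE in H.
by rewrite H.
Qed.

Section Core.
Variable R : realType.

Lemma powineq (p q : R) (m a b : nat) : 0 < p -> p <= q -> q < 1 -> 1 <= p + q ->
  a%:R = m%:R * p -> b%:R = m%:R * q -> (a <= m)%N -> (b <= m)%N ->
  q ^+ (a + b) * (1 - q) ^+ ((m - a) + (m - b)) <=
  p ^+ (a + b) * (1 - p) ^+ ((m - a) + (m - b)).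
Proof.
move=> p0 pq q1 pq1 ha hb am bm.
have q0 : 0 < q by lra.
have hq1 : 0 < 1 - q by lra.
have hp1 : 0 < 1 - p by lra.
have hE := @E_ge0 R ((p + q) / 2) ((q - p) / 2) ltac:(lra) ltac:(lra) ltac:(lra) ltac:(lra).
have e1 : (p + q) / 2 - (q - p) / 2 = p by field.
have e2 : (p + q) / 2 + (q - p) / 2 = q by field.
have e3 : 1 - (p + q) / 2 + (q - p) / 2 = 1 - p by field.
have e4 : 1 - (p + q) / 2 - (q - p) / 2 = 1 - q by field.
rewrite /E e1 e2 e3 e4 in hE.
have N1 : (a + b)%:R = m%:R * (p + q) :> R by rewrite natrD ha hb; ring.
have N2 : ((m - a) + (m - b))%:R = m%:R * (2 - (p + q)) :> R.
  by rewrite natrD !natrB // ha hb; ring.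
apply: lnle; try by apply: mulr_gt0; apply: exprn_gt0.
rewrite !lnpp // N1 N2.
rewrite -subr_ge0.
have -> : ln p * (m%:R * (p + q)) + ln (1 - p) * (m%:R * (2 - (p + q))) -
  (ln q * (m%:R * (p + q)) + ln (1 - q) * (m%:R * (2 - (p + q)))) =
  m%:R * (2 * ((p + q) / 2) * (ln p - ln q) + (2 - 2 * ((p + q) / 2)) * (ln (1 - p) - ln (1 - q))).
  by field.
by apply: mulr_ge0.
Qed.

Lemma hRE (m a : nat) (p : R) : a%:R = m%:R * p -> (a <= m)%N ->
  hR R m a = ('C(m, a))%:R * m%:R ^+ m * p ^+ a * (1 - p) ^+ (m - a).
Proof.
move=> ha am; rewrite /hR natrB // ha.
have -> : m%:R - m%:R * p = m%:R * (1 - p) :> R by ring.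
rewrite !exprMn.
have -> : (m%:R : R) ^+ m = m%:R ^+ a * m%:R ^+ (m - a) by rewrite -exprD subnKC.
ring.
Qed.

Lemma core (p q : R) (m a b : nat) : 0 < p -> p <= q -> q < 1 -> 1 <= p + q ->
  (1 <= m)%N -> a%:R = m%:R * p -> b%:R = m%:R * q ->
  lik m a q <= lik m b p.
Proof.
move=> p0 pq q1 pq1 m1 ha hb.
have m0 : 0 < (m%:R : R) by rewrite ltr0n.
have am : (a <= m)%N by rewrite -(ler_nat R) ha ler_piMr //; lra.
have bm : (b <= m)%N by rewrite -(ler_nat R) hb ler_piMr //; lra.
have ab : (a <= b)%N by rewrite -(ler_nat R) ha hb ler_pM2l.
have mab : (m <= a + b)%N by rewrite -(ler_nat R) natrD ha hb -mulrDr ler_peMr.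
have hh := @hmain R m a b ab bm mab.
have hpw := @powineq p q m a b p0 pq q1 pq1 ha hb am bm.
have hq1 : 0 < 1 - q by lra.
have hp1 : 0 < 1 - p by lra.
have q0 : 0 < q by lra.
set W := m%:R ^+ m * p ^+ a * (1 - p) ^+ (m - a) * q ^+ b * (1 - q) ^+ (m - b).
have W0 : 0 < W by rewrite /W !mulr_gt0 // exprn_gt0.
rewrite -(ler_pM2r W0).
have -> : lik m a q * W = hR R m a * (q ^+ (a + b) * (1 - q) ^+ ((m - a) + (m - b))).
  rewrite (@hRE m a p ha am) /lik /W !exprD; ring.
have -> : lik m b p * W = hR R m b * (p ^+ (a + b) * (1 - p) ^+ ((m - a) + (m - b))).
  rewrite (@hRE m b q hb bm) /lik /W !exprD; ring.
apply: ler_pM => //.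
- rewrite /hR; apply: mulr_ge0; [apply: mulr_ge0 => //|]; exact: exprn_ge0.
- by rewrite mulr_ge0 // exprn_ge0 // ltW.
Qed.

Lemma likflip (m a : nat) (q : R) : (a <= m)%N -> lik m (m - a) (1 - q) = lik m a q.
Proof.
move=> am; rewrite /lik bin_sub // subKn //.
have -> : 1 - (1 - q) = q by ring.
ring.
Qed.

End Core.

Theorem mainTheorem7 (R : realType) (p q : R) (m kp kq : nat) :
  0 < p < 1 -> 0 < q < 1 -> (1 <= m)%N ->
  kp%:R = m%:R * p -> kq%:R = m%:R * q ->
  lik m kp q > lik m kq p ->
  chi2 p q < chi2 q p.
Proof.
move=> /andP[p0 p1] /andP[q0 q1] m1 hp hq hl.
rewrite ltNge; apply/negP => hc.
have e1 : chi2 p q = (p - q) ^+ 2 / (q * (1 - q)) by rewrite /chi2; field; lra.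
have e2 : chi2 q p = (p - q) ^+ 2 / (p * (1 - p)) by rewrite /chi2; field; lra.
rewrite e1 e2 in hc.
have ha : 0 < q * (1 - q) by nra.
have hb : 0 < p * (1 - p) by nra.
case: (eqVneq p q) => [epq|npq].
  have ek : kp = kq by apply/eqP; rewrite -(eqr_nat R) hp hq epq.
  by move: hl; rewrite ek epq ltxx.
have X0 : 0 < (p - q) ^+ 2 by rewrite exprn_even_gt0 // subr_eq0.
rewrite ler_pdivrMr // mulrAC ler_pdivlMr // in hc.
rewrite ler_pM2l // in hc.
have m0 : 0 < (m%:R : R) by rewrite ltr0n.
have am : (kp <= m)%N by rewrite -(ler_nat R) hp ler_piMr //; lra.
have bm : (kq <= m)%N by rewrite -(ler_nat R) hq ler_piMr //; lra.
case: (ltrP p q) => pq.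
  have hpq1 : 1 <= p + q by nra.
  have := @core R p q m kp kq p0 (ltW pq) q1 hpq1 m1 hp hq.
  by rewrite leNgt hl.
have hpq1 : 1 <= (1 - p) + (1 - q) by nra.
have hp' : (m - kp)%:R = m%:R * (1 - p) :> R by rewrite natrB // hp; ring.
have hq' : (m - kq)%:R = m%:R * (1 - q) :> R by rewrite natrB // hq; ring.
have := @core R (1 - p) (1 - q) m (m - kp) (m - kq) ltac:(lra) ltac:(lra) ltac:(lra) hpq1 m1 hp' hq'.
rewrite !likflip //.
by rewrite leNgt hl.
Qed.
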